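(* Fix $p\in(0,1)$ and $q=1-p$. Let $\nu_n$ be the stationary law of the careless count chain on $\{0,\dots,n\}$. Then $\nu_n(n)\sim\frac{1}{(q;q)_\infty}\frac{n!}{n^n}q^{n(n+1)/2}$ as $n\to\infty$. Consequently, $\mu_n:=\mathbb P_{\nu_n}(K_0<n,K_1=n)=\nu_n(n)(1-q^n)\sim\frac{1}{(q;q)_\infty}\frac{n!}{n^n}q^{n(n+1)/2}$.
   Context: The careless count chain $(K_t)$ on $\{0,1,\dots,n\}$ is the Markov chain with transitions: given $K_t=k$, with probability $k/n$ one has $K_{t+1}\sim\mathrm{Bin}(k,q)$, and with probability $(n-k)/n$ one has $K_{t+1}\sim\mathrm{Bin}(k+1,q)$. (It is the number of held coupons in the careless collector where each round one uniformly drawn type is added and then each held coupon is independently lost with probability $p$.) It is irreducible and aperiodic with unique stationary law $\nu_n$. $(q;q)_\infty:=\prod_{r=1}^\infty(1-q^r)$. *)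

(* Defs.v *)
From mathcomp Require Import all_boot all_order all_algebra.
From mathcomp Require Import all_classical all_reals all_analysis.
Set Implicit Arguments. Unset Strict Implicit. Unset Printing Implicit Defensive.
Import Order.TTheory GRing.Theory Num.Theory.
Local Open Scope classical_set_scope.
Local Open Scope ring_scope.

Definition binpmf {R : realType} (q : R) (m j : nat) : R :=
  ('C(m, j))%:R * q ^+ j * (1 - q) ^+ (m - j).

Definition careless_P {R : realType} (q : R) (n k j : nat) : R :=
  (k%:R / n%:R) * binpmf q k j + ((n - k)%:R / n%:R) * binpmf q k.+1 j.

Definition is_stationary {R : realType} (q : R) (n : nat) (nu : nat -> R) : Prop :=
  (forall k, (k <= n)%N -> 0 <= nu k) /\
  \sum_(0 <= k < n.+1) nu k = 1 /\
  (forall j, (j <= n)%N -> nu j = \sum_(0 <= k < n.+1) nu k * careless_P q n k j).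

Definition qpoch_inf {R : realType} (q : R) : R :=
  lim ((fun N : nat => \prod_(1 <= r < N.+1) (1 - q ^+ r)) @ \oo).

Definition profile {R : realType} (q : R) (n : nat) : R :=
  (qpoch_inf q)^-1 * ((n`!)%:R / (n%:R ^+ n)) * q ^+ ((n * n.+1) %/ 2).

(* mu_n = P_nu(K_0 < n, K_1 = n) *)
Definition mu_of {R : realType} (q : R) (n : nat) (nu : nat -> R) : R :=
  \sum_(0 <= k < n) nu k * careless_P q n k n.

(* Main.v *)
Require Import Defs.
From mathcomp Require Import all_boot all_order all_algebra.
From mathcomp Require Import all_classical all_reals all_analysis.
From mathcomp Require Import ring lra zify.
Import Order.TTheory GRing.Theory Num.Theory.
Import numFieldNormedType.Exports.
Local Open Scope classical_set_scope.
Local Open Scope ring_scope.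
Section Alg.
Variable R : realType.
Variable q : R.

Lemma binpmfS m j : binpmf q m.+1 j.+1 = (1-q) * binpmf q m j.+1 + q * binpmf q m j.
Proof.
rewrite /binpmf binS natrD subSS.
case: (ltnP j m) => h.
  rewrite -(subnSK h) !exprS; ring.
rewrite (bin_small (n:=m) (m:=j.+1)) ?ltnS //.
have -> : (m - j = 0)%N by apply/eqP; rewrite subn_eq0.
rewrite !exprS; ring.
Qed.

Lemma binpmf0S m : binpmf q m.+1 0 = (1-q) * binpmf q m 0.
Proof. by rewrite /binpmf !bin0 !subn0 exprS; ring. Qed.

Lemma binpmf_small m j : (m < j)%N -> binpmf q m j = 0.
Proof. by move=> h; rewrite /binpmf bin_small // mul0r mul0r. Qed.

Lemma sum_step (c : nat -> R) m N :
  \sum_(0 <= j < N.+1) c j * binpmf q m.+1 j =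
  (1-q) * \sum_(0 <= j < N.+1) c j * binpmf q m j +
  q * \sum_(0 <= j < N) c j.+1 * binpmf q m j.
Proof.
rewrite !big_nat_recl // binpmf0S.
under eq_bigr do rewrite binpmfS mulrDr.
rewrite big_split /= mulrDr.
have e1 : \sum_(0 <= i < N) c i.+1 * ((1 - q) * binpmf q m i.+1) =
  (1-q) * \sum_(0 <= i < N) c i.+1 * binpmf q m i.+1.
  by rewrite mulr_sumr; apply: eq_bigr => i _; ring.
have e2 : \sum_(0 <= i < N) c i.+1 * (q * binpmf q m i) =
  q * \sum_(0 <= i < N) c i.+1 * binpmf q m i.
  by rewrite mulr_sumr; apply: eq_bigr => i _; ring.
rewrite e1 e2; ring.
Qed.

Lemma thin m r N : (m < N)%N ->
  \sum_(0 <= j < N) ('C(j, r))%:R * binpmf q m j = ('C(m, r))%:R * q ^+ r.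
Proof.
elim: m r N => [|m IH] r N hN.
  case: N hN => // N _; rewrite big_nat_recl //.
  rewrite big1_seq ?addr0; last first.
    by move=> i _; rewrite binpmf_small ?mulr0.
  rewrite /binpmf bin0 subn0 !expr0 !mulr1.
  by case: r => [|r]; rewrite ?bin0 ?expr0 ?mulr1 // bin0n !mul0r.
case: N hN => // N hN; rewrite sum_step.
rewrite IH //; last by rewrite ltnW.
case: r => [|s].
  have h0 : \sum_(0 <= j < N) ('C(j.+1, 0))%:R * binpmf q m j = 1.
    have H := IH 0%N N hN; rewrite bin0 expr0 mulr1 in H; rewrite -[RHS]H.
    by apply: eq_bigr => j _; rewrite !bin0.
  by rewrite h0 !bin0 !expr0 !mulr1; ring.
under eq_bigr do rewrite binS natrD mulrDl.
rewrite big_split /= !IH // binS natrD exprS; ring.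
Qed.
End Alg.
Section Mom.
Variable R : realType.
Variable q : R.
Variable n : nat.
Variable nu : nat -> R.
Hypothesis hn : (0 < n)%N.
Hypothesis hst : is_stationary q n nu.

Definition M r := \sum_(0 <= k < n.+1) nu k * ('C(k, r))%:R.

Lemma M_expand r : M r =
  \sum_(0 <= k < n.+1) nu k * \sum_(0 <= j < n.+1) ('C(j, r))%:R * careless_P q n k j.
Proof.
case: hst => _ [_ st].
rewrite /M.
transitivity (\sum_(0 <= j < n.+1) ('C(j, r))%:R * nu j).
  by apply: eq_bigr => j _; rewrite mulrC.
transitivity (\sum_(0 <= j < n.+1) ('C(j, r))%:R *
   \sum_(0 <= k < n.+1) nu k * careless_P q n k j).
  by apply: eq_big_nat => j /andP[_ hj]; rewrite -(st j).
under eq_bigr do rewrite mulr_sumr.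
rewrite exchange_big /=; apply: eq_bigr => k _; rewrite mulr_sumr.
by apply: eq_bigr => j _; ring.
Qed.

Lemma inner_sum r k : (k <= n)%N ->
  \sum_(0 <= j < n.+1) ('C(j, r))%:R * careless_P q n k j =
  q ^+ r * (k%:R / n%:R * ('C(k, r))%:R + (n - k)%:R / n%:R * ('C(k.+1, r))%:R).
Proof.
move=> hk; rewrite /careless_P.
under eq_bigr do rewrite mulrDr.
rewrite big_split /=.
have e1 : \sum_(0 <= j < n.+1) ('C(j, r))%:R * (k%:R / n%:R * binpmf q k j) =
   k%:R / n%:R * \sum_(0 <= j < n.+1) ('C(j, r))%:R * binpmf q k j.
  by rewrite mulr_sumr; apply: eq_bigr => j _; ring.
have e2 : \sum_(0 <= j < n.+1) ('C(j, r))%:R * ((n - k)%:R / n%:R * binpmf q k.+1 j) =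
   (n - k)%:R / n%:R * \sum_(0 <= j < n.+1) ('C(j, r))%:R * binpmf q k.+1 j.
  by rewrite mulr_sumr; apply: eq_bigr => j _; ring.
rewrite e1 e2 thin ?ltnS //.
case: (ltnP k n) => hk2.
  by rewrite thin ?ltnS //; ring.
have -> : k = n by apply/eqP; rewrite eqn_leq hk hk2.
by rewrite subnn !mul0r; ring.
Qed.

Lemma M_step s : M s.+1 * (1 - q ^+ s.+1 * (1 - s.+1%:R / n%:R)) =
  q ^+ s.+1 * ((n%:R - s%:R) / n%:R) * M s.
Proof.
have hn0 : n%:R != 0 :> R by rewrite pnatr_eq0 -lt0n.
have e : M s.+1 = q ^+ s.+1 * (1 - s.+1%:R / n%:R) * M s.+1 +
   q ^+ s.+1 * ((n%:R - s%:R) / n%:R) * M s.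
  rewrite {1}M_expand.
  rewrite /M !mulr_sumr -big_split /=.
  apply: eq_big_nat => k /andP[_ hk]; rewrite ltnS in hk.
  rewrite inner_sum // binS natrD natrB //.
  have key : ('C(k, s.+1))%:R = (k%:R - s%:R) * ('C(k, s))%:R / s.+1%:R :> R.
    have := mul_bin_left k s => /(congr1 (fun x => x%:R : R)).
    rewrite !natrM => H.
    case: (leqP s k) => hsk.
      rewrite -natrB // -H; field; by rewrite ?nat1r ?natr1 pnatr_eq0.
    by rewrite (bin_small hsk) (@bin_small k s.+1 (leqW hsk)) mulr0 mul0r.
  rewrite key; field; by rewrite hn0 ?nat1r ?natr1 pnatr_eq0.
set a := q ^+ s.+1 * (1 - s.+1%:R / n%:R).
set b := q ^+ s.+1 * ((n%:R - s%:R) / n%:R).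
apply/eqP; rewrite -subr_eq0; apply/eqP.
transitivity (M s.+1 - (a * M s.+1 + b * M s)); first by ring.
by rewrite -e subrr.
Qed.

Lemma M0 : M 0 = 1.
Proof. case: hst => _ [h _]; rewrite -h /M; apply: eq_bigr => k _; by rewrite bin0 mulr1. Qed.

Lemma Mn : M n = nu n.
Proof.
rewrite /M big_nat_recr //= big1_seq; first by rewrite binn mulr1 add0r.
move=> k; rewrite mem_index_iota => /andP[_ hk]; by rewrite bin_small // mulr0.
Qed.

Definition dd r := 1 - q ^+ r * (1 - r%:R / n%:R).

Lemma M_prod r : M r * \prod_(0 <= i < r) dd i.+1 =
  \prod_(0 <= i < r) (q ^+ i.+1 * ((n%:R - i%:R) / n%:R)).
Proof.
elim: r => [|r IH]; first by rewrite !big_geq // M0 mulr1.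
rewrite !big_nat_recr //= -IH.
have := M_step r; rewrite /dd => H.
transitivity ((M r.+1 * (1 - q ^+ r.+1 * (1 - r.+1%:R / n%:R))) * \prod_(0 <= i < r) dd i.+1).
  by rewrite /dd; ring.
by rewrite H; ring.
Qed.

End Mom.
Lemma sum_succ n : (\sum_(0 <= i < n) i.+1 = (n * n.+1) %/ 2)%N.
Proof.
suff h : (2 * \sum_(0 <= i < n) i.+1 = n * n.+1)%N.
  by rewrite -h mulKn.
elim: n => [|n IH]; first by rewrite big_geq.
rewrite big_nat_recr //= mulnDr IH; lia.
Qed.

Lemma prod_sub n : (\prod_(0 <= i < n) (n - i) = n`!)%N.
Proof.
elim: n => [|n IH]; first by rewrite big_geq.
rewrite big_nat_recl // subn0 factS; congr (_ * _)%N.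
by rewrite -IH; apply: eq_bigr => i _; rewrite subSS.
Qed.

Lemma closed_form (R : realType) (q : R) n :
  \prod_(0 <= i < n) (q ^+ i.+1 * ((n%:R - i%:R) / n%:R)) =
  ((n`!)%:R / (n%:R ^+ n)) * q ^+ ((n * n.+1) %/ 2).
Proof.
rewrite big_split /= prodrXr sum_succ mulrC; congr (_ * _).
rewrite big_split /= prodr_const_nat subn0 exprVn; congr (_ * _).
rewrite -prod_sub natr_prod; apply: eq_big_nat => i /andP[_ hi].
by rewrite natrB // ltnW.
Qed.
Section Fin.
Variable R : realType.

Lemma prod01 (F : nat -> R) n : (forall i, (i < n)%N -> 0 <= F i <= 1) ->
  0 <= \prod_(0 <= i < n) F i <= 1.
Proof.
elim: n => [|n IH] h; first by rewrite big_geq // ler01 lexx.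
rewrite big_nat_recr //=.
have /andP[a b] := IH (fun i hi => h i (leqW hi)).
have /andP[c d] := h n (ltnSn n).
by rewrite mulr_ge0 //= mulr_ile1.
Qed.

Lemma prod_diff (F G : nat -> R) n :
  (forall i, (i < n)%N -> 0 <= F i <= 1) -> (forall i, (i < n)%N -> 0 <= G i <= 1) ->
  `|\prod_(0 <= i < n) F i - \prod_(0 <= i < n) G i| <= \sum_(0 <= i < n) `|F i - G i|.
Proof.
elim: n => [|n IH] hF hG; first by rewrite !big_geq // subrr normr0.
rewrite !big_nat_recr //=.
have IH' := IH (fun i hi => hF i (leqW hi)) (fun i hi => hG i (leqW hi)).
have /andP[pg0 pg1] := @prod01 G n (fun i hi => hG i (leqW hi)).
have /andP[f0 f1] := hF n (ltnSn n).
set PF := \prod_(0 <= i < n) F i in IH' *.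
set PG := \prod_(0 <= i < n) G i in IH' pg0 pg1 *.
have -> : PF * F n - PG * G n = (PF - PG) * F n + PG * (F n - G n) by ring.
apply: (le_trans (ler_normD _ _)); apply: lerD.
  rewrite normrM (ger0_norm f0); apply: (le_trans _ IH').
  by rewrite ler_piMr.
rewrite normrM (ger0_norm pg0) ler_piMl //.
Qed.

Lemma geom_id (q : R) n : (1 - q) * \sum_(0 <= i < n) q ^+ i.+1 = q - q ^+ n.+1.
Proof.
elim: n => [|n IH]; first by rewrite big_geq // expr1; ring.
rewrite big_nat_recr //= mulrDr IH !exprS; ring.
Qed.

Lemma ageom_id (q : R) n : (1 - q) * \sum_(0 <= i < n) (i.+1)%:R * q ^+ i.+1 =
  \sum_(0 <= i < n) q ^+ i.+1 - n%:R * q ^+ n.+1.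
Proof.
elim: n => [|n IH]; first by rewrite !big_geq // mul0r; ring.
rewrite !big_nat_recr //= mulrDr IH -(addn1 n) natrD !exprS addn1; ring.
Qed.

Lemma ageom_bound (q : R) n : 0 <= q < 1 ->
  \sum_(0 <= i < n) (i.+1)%:R * q ^+ i.+1 * (1 - q) ^+ 2 <= 1.
Proof.
move=> /andP[q0 q1].
rewrite -mulr_suml expr2 mulrA.
have e := ageom_id q n.
rewrite [X in X * (1 - q)]mulrC e.
have h1 : 0 <= n%:R * q ^+ n.+1 by rewrite mulr_ge0 // exprn_ge0.
have h2 : (\sum_(0 <= i < n) q ^+ i.+1) * (1 - q) = q - q ^+ n.+1 by rewrite mulrC geom_id.
have h3 : 0 <= q ^+ n.+1 by rewrite exprn_ge0.
have h4 : 0 <= 1 - q by rewrite subr_ge0 ltW.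
rewrite mulrBl h2.
have : 0 <= n%:R * q ^+ n.+1 * (1 - q) by rewrite mulr_ge0.
lra.
Qed.
End Fin.
Section Lim.
Variable R : realType.
Variable q : R.
Hypothesis hq0 : 0 < q.
Hypothesis hq1 : q < 1.

Definition AA N := \prod_(0 <= i < N) (1 - q ^+ i.+1).

Lemma fac01 i : 0 <= 1 - q ^+ i.+1 <= 1.
Proof.
have h1 : q ^+ i.+1 < 1 by rewrite exprn_ilt1 // ltW.
have h0 : 0 <= q ^+ i.+1 by rewrite exprn_ge0 // ltW.
apply/andP; split; lra.
Qed.

Lemma fac_gt0 i : 0 < 1 - q ^+ i.+1.
Proof. have h1 : q ^+ i.+1 < 1 by rewrite exprn_ilt1 // ltW. lra. Qed.

Lemma AA_ge0 N : 0 <= AA N.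
Proof. by have /andP[] := @prod01 R _ N (fun i _ => fac01 i). Qed.

Lemma AA_gt0 N : 0 < AA N.
Proof. by apply: prodr_gt0 => i _; apply: fac_gt0. Qed.

Lemma AA_S N : AA N.+1 = AA N * (1 - q ^+ N.+1).
Proof. by rewrite /AA big_nat_recr. Qed.

Lemma AA_noninc : {homo AA : n m / (n <= m)%N >-> (m <= n)%O}.
Proof.
apply/nonincreasing_seqP => N; rewrite AA_S.
have /andP[a b] := fac01 N.
by rewrite ler_piMr // AA_ge0.
Qed.

Lemma AA_tail N k : AA N * (1 - q ^+ N.+1 / (1 - q) + q ^+ (N + k).+1 / (1 - q))
   <= AA (N + k).
Proof.
have hq : 0 < 1 - q by rewrite subr_gt0.
elim: k => [|k IH].
  rewrite addn0; have -> : 1 - q ^+ N.+1 / (1 - q) + q ^+ N.+1 / (1 - q) = 1 by ring.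
  by rewrite mulr1.
rewrite addnS AA_S.
set a := AA (N + k). set b := AA N.
set x := q ^+ (N + k).+1.
have ex : q ^+ (N + k).+2 = x * q by rewrite /x exprS mulrC.
rewrite ex.
have hx : 0 <= x by rewrite exprn_ge0 // ltW.
have hab : a <= b by apply: AA_noninc; rewrite leq_addr.
have hax : a * x <= b * x by rewrite ler_wpM2r.
have ey : x * q / (1 - q) = x / (1 - q) - x by field; rewrite lt0r_neq0.
rewrite ey.
set c := q ^+ N.+1 / (1 - q). set y := x / (1 - q).
have IH' : b * (1 - c + y) <= a := IH.
clear IH; clearbody a b x c y.
have : b * (1 - c + (y - x)) = b * (1 - c + y) - b * x by ring.
have : a * (1 - x) = a - a * x by ring.
lra.
Qed.

Lemma exists_N : exists N, q ^+ N.+1 / (1 - q) <= 1/2.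
Proof.
have hq : 0 < 1 - q by rewrite subr_gt0.
have := @cvg_expr R q; rewrite ger0_norm ?ltW // => /(_ hq1) h.
have hq2 : 0 < (1 - q) / 2 by rewrite divr_gt0.
move/cvgr0_norm_lt: h => /(_ _ hq2) [N _ HN].
exists N; have := HN N.+1 (leqnSn N) => /=.
rewrite ger0_norm; last by rewrite exprn_ge0 // ltW.
move=> hl.
rewrite ler_pdivrMr //; lra.
Qed.

Lemma AA_lb : exists c, 0 < c /\ forall n, c <= AA n.
Proof.
have [N hN] := exists_N.
exists (AA N / 2); split; first by rewrite divr_gt0 // AA_gt0.
move=> n; case: (leqP N n) => h.
  rewrite -(subnKC h).
  apply: le_trans (AA_tail N (n - N)).
  have hx : 0 <= q ^+ (N + (n - N)).+1 / (1 - q) by rewrite divr_ge0 ?exprn_ge0 ?subr_ge0 ?ltW.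
  have ha := AA_ge0 N.
  have : AA N * (1 - q ^+ N.+1 / (1 - q) + q ^+ (N + (n - N)).+1 / (1 - q)) =
     AA N * (1 - q ^+ N.+1 / (1 - q)) + AA N * (q ^+ (N + (n - N)).+1 / (1 - q)) by ring.
  have : AA N * (1/2) <= AA N * (1 - q ^+ N.+1 / (1 - q)) by rewrite ler_wpM2l //; lra.
  have : 0 <= AA N * (q ^+ (N + (n - N)).+1 / (1 - q)) by rewrite mulr_ge0.
  lra.
have := @AA_noninc n N (ltnW h); have := AA_gt0 N; lra.
Qed.

End Lim.
Arguments AA {R}.
Arguments dd {R}.
Section Lim2.
Variable R : realType.
Variable q : R.
Hypothesis hq0 : 0 < q.
Hypothesis hq1 : q < 1.

Lemma AA_cvg : (fun N => AA q N : R) @ \oo --> (qpoch_inf q : R).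
Proof.
have lb : has_lbound (range (AA q)).
  by exists 0 => x [n _ <-]; apply: AA_ge0.
have hA := nonincreasing_cvgn (@AA_noninc R q hq0 hq1) lb.
have e : qpoch_inf q = lim (AA q @ \oo).
  rewrite /qpoch_inf (_ : (fun N : nat => \prod_(1 <= r < N.+1) (1 - q ^+ r)) = AA q) //.
  by apply: funext => N; rewrite big_add1.
by rewrite e (cvg_lim (@Rhausdorff R) hA).
Qed.

Lemma Q_pos : 0 < qpoch_inf q.
Proof.
have [c [c0 hc]] := @AA_lb R q hq0 hq1.
apply: (lt_le_trans c0).
have e : qpoch_inf q = lim (AA q @ \oo).
  rewrite /qpoch_inf (_ : (fun N : nat => \prod_(1 <= r < N.+1) (1 - q ^+ r)) = AA q) //.
  by apply: funext => N; rewrite big_add1.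
rewrite e; apply: limr_ge; first exact: (cvgP _ AA_cvg).
by apply: nearW => n; apply: hc.
Qed.

Definition DD n := \prod_(0 <= i < n) dd q n i.+1.

Lemma dd01 n i : (i < n)%N -> 0 <= dd q n i.+1 <= 1.
Proof.
move=> hi; rewrite /dd.
have hn : 0 < n%:R :> R by rewrite ltr0n; apply: leq_ltn_trans hi.
have h1 : i.+1%:R / n%:R <= 1 :> R by rewrite ler_pdivrMr // mul1r ler_nat.
have h2 : 0 <= i.+1%:R / n%:R :> R by rewrite divr_ge0.
have h3 : 0 <= q ^+ i.+1 by rewrite exprn_ge0 // ltW.
have h4 : q ^+ i.+1 <= 1 by rewrite exprn_ile1 // ltW.
have h5 : 0 <= q ^+ i.+1 * (1 - i.+1%:R / n%:R) by rewrite mulr_ge0 // subr_ge0.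
have h6 : q ^+ i.+1 * (1 - i.+1%:R / n%:R) <= 1.
  by rewrite mulr_ile1 // ?subr_ge0 //; lra.
apply/andP; split; lra.
Qed.

Lemma dd_gt0 n i : 0 < dd q n i.+1.
Proof.
rewrite /dd.
have h2 : 0 <= i.+1%:R / n%:R :> R by rewrite divr_ge0.
have h3 : 0 <= q ^+ i.+1 by rewrite exprn_ge0 // ltW.
have h4 : q ^+ i.+1 < 1 by rewrite exprn_ilt1 // ltW.
have : q ^+ i.+1 * (1 - i.+1%:R / n%:R) <= q ^+ i.+1 by rewrite ler_piMr //; lra.
lra.
Qed.

Lemma DD_gt0 n : 0 < DD n.
Proof. by apply: prodr_gt0 => i _; apply: dd_gt0. Qed.

Lemma DA_bound n : (0 < n)%N ->
  `|DD n - AA q n| <= ((1 - q) ^+ 2)^-1 / n%:R.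
Proof.
move=> hn.
have hn' : 0 < n%:R :> R by rewrite ltr0n.
have hq : 0 < 1 - q by rewrite subr_gt0.
have hF : forall i, (i < n)%N -> 0 <= dd q n i.+1 <= 1 by move=> i hi; apply: dd01.
have hG : forall i, (i < n)%N -> 0 <= 1 - q ^+ i.+1 <= 1 by move=> i _; apply: fac01.
apply: le_trans (@prod_diff R _ _ n hF hG) _.
rewrite (eq_bigr (fun i => (i.+1)%:R * q ^+ i.+1 / n%:R)); last first.
  move=> i _; rewrite /dd.
  have -> : 1 - q ^+ i.+1 * (1 - i.+1%:R / n%:R) - (1 - q ^+ i.+1) =
     i.+1%:R * q ^+ i.+1 / n%:R by field; rewrite lt0r_neq0.
  by rewrite ger0_norm // divr_ge0 // mulr_ge0 // exprn_ge0 // ltW.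
rewrite -mulr_suml ler_pM2r ?invr_gt0 //.
rewrite -(ler_pM2r (exprn_gt0 2 hq)) mulVf ?expf_neq0 ?lt0r_neq0 //.
rewrite mulr_suml. apply: ageom_bound; rewrite ltW //=.
Qed.

End Lim2.
Arguments DD {R}.
Section Lim3.
Variable R : realType.
Variable q : R.
Hypothesis hq0 : 0 < q.
Hypothesis hq1 : q < 1.

Lemma DD_cvg : (fun n => DD q n : R) @ \oo --> (qpoch_inf q : R).
Proof.
set K := ((1 - q) ^+ 2)^-1.
have h0 : (fun n => DD q n - AA q n : R) @ \oo --> (0 : R).
  apply: (@squeeze_cvgr _ _ _ _ (fun n => - (2 * K * harmonic n)) (fun n => 2 * K * harmonic n)).
  - near=> n.
    have hn : (0 < n)%N by near: n; exact: nbhs_infty_gt.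
    have hb := @DA_bound R q hq0 hq1 n hn.
    have hh : K / n%:R <= 2 * K * harmonic n.
      rewrite /harmonic /=.
      have K0 : 0 <= K by rewrite /K invr_ge0 exprn_ge0 // subr_ge0 ltW.
      have n0 : 0 < n%:R :> R by rewrite ltr0n.
      have n1 : 1 <= n%:R :> R by rewrite ler1n.
      have e : 2 * (n.+1%:R)^-1 - n%:R^-1 = (n%:R - 1) / (n%:R * n.+1%:R) :> R.
        by field; rewrite nat1r !pnatr_eq0 /= -lt0n hn.
      have : 0 <= 2 * (n.+1%:R)^-1 - n%:R^-1 :> R.
        by rewrite e divr_ge0 // ?subr_ge0 // mulr_ge0 // ltW.
      rewrite subr_ge0 => h.
      have -> : 2 * K * (n.+1%:R)^-1 = K * (2 * (n.+1%:R)^-1) by ring.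
      by rewrite ler_wpM2l.
    have := le_trans hb hh; rewrite ler_norml => /andP[a b].
    by rewrite a b.
  - rewrite -oppr0; apply: cvgN; rewrite -(mulr0 (2 * K)); apply: cvgMl_tmp; exact: cvg_harmonic.
  - rewrite -(mulr0 (2 * K)); apply: cvgMl_tmp; exact: cvg_harmonic.
have h := cvgD h0 (@AA_cvg R q hq0 hq1); rewrite add0r in h.
have -> : (fun n => DD q n : R) = (fun n => (DD q n - AA q n) + AA q n).
  by apply: funext => n; ring.
exact: h.
Unshelve. all: by end_near.
Qed.

End Lim3.
Lemma ratio (R : realType) (q : R) (hq0 : 0 < q) (hq1 : q < 1) n (nu : nat -> R) :
  (0 < n)%N -> is_stationary q n nu ->
  nu n / profile q n = qpoch_inf q / DD q n.
Proof.
move=> hn hst.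
have h1 := @M_prod R q n nu hn hst n.
rewrite (@Mn R n nu) closed_form in h1.
have hD := @DD_gt0 R q hq0 hq1 n.
have hQ := @Q_pos R q hq0 hq1.
set c := (n`!)%:R / n%:R ^+ n * q ^+ (n * n.+1 %/ 2) in h1.
have hc : c != 0.
  have f1 : (n`!)%:R != 0 :> R by rewrite pnatr_eq0 -lt0n fact_gt0.
  have f2 : (n%:R ^+ n)^-1 != 0 :> R by rewrite invr_eq0 expf_neq0 // pnatr_eq0 -lt0n.
  have f3 : q ^+ (n * n.+1 %/ 2) != 0 by rewrite expf_neq0 // lt0r_neq0.
  by rewrite /c !mulf_neq0.
have e1 : nu n = c / DD q n.
  by rewrite /DD -h1; field; rewrite lt0r_neq0.
have e2 : profile q n = (qpoch_inf q)^-1 * c by rewrite /profile /c !mulrA.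
rewrite e1 e2; field.
by rewrite hc !lt0r_neq0.
Qed.
Lemma part2 (R : realType) (q : R) n (nu : nat -> R) :
  (0 < n)%N -> is_stationary q n nu ->
  mu_of q n nu = nu n * (1 - q ^+ n).
Proof.
move=> hn [_ [_ st]].
have := st n (leqnn n); rewrite big_nat_recr //= => e.
have hP : careless_P q n n n = q ^+ n.
  rewrite /careless_P subnn divff ?pnatr_eq0 -?lt0n // !mul0r addr0 mul1r.
  by rewrite /binpmf binn subnn expr0 mulr1 mul1r.
rewrite hP in e; rewrite /mu_of.
set s := \sum_(0 <= i < n) nu i * careless_P q n i n in e *.
rewrite mulrBr mulr1 {1}e; ring.
Qed.

Theorem mainTheorem6 (R : realType) (p : R) (hp0 : 0 < p) (hp1 : p < 1)
  (nu : nat -> nat -> R)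
  (hnu : forall n : nat, (1 <= n)%N -> is_stationary (1 - p) n (nu n)) :
  ((fun n : nat => nu n n / profile (1 - p) n) @ \oo --> (1 : R^o)) /\
  (forall n : nat, (1 <= n)%N ->
     mu_of (1 - p) n (nu n) = nu n n * (1 - (1 - p) ^+ n)) /\
  ((fun n : nat => mu_of (1 - p) n (nu n) / profile (1 - p) n) @ \oo --> (1 : R^o)).
Proof.
set q := 1 - p.
have hq0 : 0 < q by rewrite /q subr_gt0.
have hq1 : q < 1 by rewrite /q ltrBlDr ltrDl.
have hQ := @Q_pos R q hq0 hq1.
have hlim : (fun n => qpoch_inf q / DD q n : R) @ \oo --> (1 : R).
  have h : (fun n => qpoch_inf q * (DD q n : R)^-1) @ \oo --> qpoch_inf q * (qpoch_inf q)^-1.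
    apply: cvgMl_tmp; apply: cvgV; first exact: lt0r_neq0.
    exact: DD_cvg.
  by rewrite divff ?lt0r_neq0 // in h.
have P1 : (fun n : nat => nu n n / profile q n) @ \oo --> (1 : R).
  apply: (cvg_trans _ hlim); apply: near_eq_cvg; near=> n.
  have hn : (0 < n)%N by near: n; exact: nbhs_infty_gt.
  by rewrite /= ratio //; apply: hnu.
have P2 : forall n : nat, (1 <= n)%N -> mu_of q n (nu n) = nu n n * (1 - q ^+ n).
  by move=> n hn; rewrite part2 //; apply: hnu.
split; first exact: P1.
split; first exact: P2.
have hexp : (fun n => 1 - q ^+ n : R) @ \oo --> (1 : R).
  rewrite -[X in _ --> X]subr0; apply: cvgB; first exact: cvg_cst.
  by apply: cvg_expr; rewrite ger0_norm ?ltW.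
have h : (fun n => nu n n / profile q n * (1 - q ^+ n)) @ \oo --> (1 : R).
  by rewrite -[X in _ --> X](mulr1 1); apply: cvgM.
have P3 : (fun n : nat => mu_of q n (nu n) / profile q n) @ \oo --> (1 : R).
  apply: (cvg_trans _ h); apply: near_eq_cvg; near=> n.
  have hn : (0 < n)%N by near: n; exact: nbhs_infty_gt.
  by rewrite /= P2 //; rewrite mulrAC.
exact: P3.
Unshelve. all: by end_near.
Qed.
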